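(* Let $n\ge3$ and let $a$ be an integer with $0\le a\le n-1$. The unidirectional cycle $\overrightarrow{C_n}$ is $D$-antimagic for each of the following sets $D$: (1) $D=\{a,(a+1)\bmod n\}$; (2) $D=\{a,(a+2)\bmod n\}$, provided $n\neq4$; (3) $D=\{a,(a+3)\bmod n\}$, provided $n\ge4$ and $n\neq6$; (4) $D=\{0,1,\dots,n-1\}\setminus\{a,(a+1)\bmod n\}$; (5) $D=\{0,1,\dots,n-1\}\setminus\{a,(a+2)\bmod n\}$, provided $n\neq4$; (6) $D=\{0,1,\dots,n-1\}\setminus\{a,(a+3)\bmod n\}$, provided $n\ge4$ and $n\neq6$. (In cases (4)–(6) it is assumed that $D$ is nonempty.)
   Context: An oriented graph is a simple graph each of whose edges is given one direction. For vertices $u,v$, $d(u,v)$ is the length of a shortest directed path from $u$ to $v$ ($d(u,u)=0$). For a set $D$ of nonnegative integers, $N_D(v)=\{y : d(v,y)\in D\}$; for a bijection $f:V\to\{1,\dots,|V|\}$, $\omega_D(v)=\sum_{x\in N_D(v)}f(x)$ (empty sum $0$); $f$ is $D$-antimagic if distinct vertices have distinct $D$-weights, and the graph is $D$-antimagic if such an $f$ exists. The unidirectional cycle $\overrightarrow{C_n}$ ($n\ge3$) has vertices $v_1,\dots,v_n$ and arcs $(v_i,v_{i+1})$ for $1\le i\le n-1$ and $(v_n,v_1)$; $d(v_i,v_j)=(j-i)\bmod n$. *)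

(* Defs.v *)
From mathcomp Require Import all_boot.
Set Implicit Arguments. Unset Strict Implicit. Unset Printing Implicit Defensive.

Definition labeling (V : finType) (f : V -> nat) : Prop :=
  [/\ injective f,
      (forall x, 0 < f x <= #|V|) &
      (forall k, 0 < k <= #|V| -> exists x, f x = k)].

Definition Dweight (V : finType) (d : V -> V -> nat) (D : pred nat)
    (f : V -> nat) (v : V) : nat :=
  \sum_(x : V | D (d v x)) f x.

Definition D_antimagic_labeling (V : finType) (d : V -> V -> nat)
    (D : pred nat) (f : V -> nat) : Prop :=
  labeling f /\ injective (Dweight d D f).

Definition D_antimagic (V : finType) (d : V -> V -> nat) (D : pred nat) : Prop :=
  exists f : V -> nat, D_antimagic_labeling d D f.

(* Unidirectional cycle C_n on vertices 'I_n (v_{i+1} ~ i), with directed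
   distance d(v_i, v_j) = (j - i) mod n. *)
Definition cycle_dist (n : nat) (i j : 'I_n) : nat := (j + n - i) %% n.

Definition Dpair (n a k : nat) : pred nat :=
  fun m => (m == a) || (m == (a + k) %% n).

Definition Dcopair (n a k : nat) : pred nat :=
  fun m => (m < n) && ~~ Dpair n a k m.

(* Main.v *)
Require Import Defs.
From mathcomp Require Import all_boot zify.
Definition addm n x y := if x + y < n then x + y else x + y - n.
Ltac noif t := lazymatch t with context [if _ then _ else _] => fail | _ => idtac end.
Ltac split1 := match goal with
 | |- context [ (?x < ?y) ] => noif x; noif y; case: (ltnP x y) => ?; cbv iota beta
 | |- context [ (?x == ?y) ] => noif x; noif y; case: (x =P y) => ?; cbv iota beta
 end.
Ltac crush := repeat (split1; try (exfalso; lia)); lia.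

Lemma modlt2 n y : y < 2 * n -> y %% n = if y < n then y else y - n.
Proof.
move=> H2; case: (ltnP y n) => H1; first by rewrite modn_small.
have -> : y = (y - n) + n by lia.
by rewrite modnDr modn_small; lia.
Qed.

Section W.
Variables (n a k : nat) (h : nat -> nat).
Hypotheses (Hk : 0 < k < n) (Ha : a < n) (Hb : forall i, i < n -> h i < n)
  (Hinv : forall i, i < n -> h (h i) = i)
  (Hg : forall i j, i < n -> j < n -> h i + h (addm n i k) = h j + h (addm n j k) -> i = j).

Definition lab (x : 'I_n) := (h x).+1.

Lemma lab_ok : labeling lab.
Proof.
split.
- move=> x y /eqP; rewrite eqSS => /eqP E.
  apply: ord_inj; by rewrite -(Hinv _ (ltn_ord x)) E Hinv.
- move=> x; rewrite card_ord /lab /=; have := Hb _ (ltn_ord x); lia.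
- move=> m; rewrite card_ord => Hm.
  have Hm1 : m.-1 < n by lia.
  exists (Ordinal (Hb _ Hm1)); rewrite /lab /= Hinv //; lia.
Qed.

Lemma addm_lt x y : x < n -> y < n -> addm n x y < n.
Proof. rewrite /addm => Hx Hy; case: (ltnP (x+y) n); lia. Qed.

Lemma wpair (v : 'I_n) : Dweight (@cycle_dist n) (Dpair n a k) lab v =
  (h (addm n v a)).+1 + (h (addm n v (addm n a k))).+1.
Proof.
have Hv := ltn_ord v.
have Hb' : addm n a k < n by apply: addm_lt; lia.
have Hbd : (a + k < n /\ addm n a k = a + k) \/ (n <= a + k /\ addm n a k = a + k - n).
  rewrite /addm; case: ltnP; lia.
move: Hb' Hbd; set b := addm n a k; clearbody b => Hb' Hbd.
pose x1 : 'I_n := Ordinal (addm_lt _ _ Hv Ha).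
pose x2 : 'I_n := Ordinal (addm_lt _ _ Hv Hb').
have E : forall x : 'I_n, Dpair n a k (cycle_dist v x) = (x == x1) || (x == x2).
  move=> x; have Hx := ltn_ord x.
  rewrite /Dpair /cycle_dist -!val_eqE /= modlt2; last lia.
  rewrite (@modlt2 n (a + k)); last lia.
  rewrite /addm.
  repeat (split1; try (exfalso; lia)); rewrite /= ?orbT ?orbF //; lia.
have Hne : x1 != x2.
  rewrite -val_eqE /= /addm; apply/eqP; repeat split1; lia.
rewrite /Dweight (eq_bigl _ _ E) (bigD1 x1) ?eqxx //= (bigD1 x2) /=; last first.
  by rewrite eqxx orbT eq_sym Hne.
rewrite big1 ?addn0 //.
move=> x /andP [/andP [/orP [] -> ]]; by rewrite ?eqxx.
Qed.

Lemma wtot (v : 'I_n) : Dweight (@cycle_dist n) (Dcopair n a k) lab v +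
  Dweight (@cycle_dist n) (Dpair n a k) lab v = \sum_(x : 'I_n) lab x.
Proof.
rewrite (bigID (fun x => Dpair n a k (cycle_dist v x))) /= addnC /Dweight.
congr (_ + _); apply: eq_bigl => x.
rewrite /Dcopair ltn_pmod //; lia.
Qed.

Lemma inj_pair : injective (Dweight (@cycle_dist n) (Dpair n a k) lab).
Proof.
move=> v w; rewrite !wpair => E.
have Hv := ltn_ord v; have Hw := ltn_ord w.
have Hb' : addm n a k < n by apply: addm_lt; lia.
have H1 : forall u : 'I_n, addm n u (addm n a k) = addm n (addm n u a) k.
  move=> u; have := ltn_ord u; rewrite /addm.
  case: (ltnP (a + k) n) => ?; case: (ltnP (u + a) n) => ?; repeat split1; lia.
rewrite !H1 in E.
have := Hg _ _ (addm_lt _ _ Hv Ha) (addm_lt _ _ Hw Ha).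
move=> /(_ ltac:(lia)) E2.
apply: ord_inj; move: E2; rewrite /addm; repeat split1; lia.
Qed.

Lemma pair_ok : D_antimagic (@cycle_dist n) (Dpair n a k) /\
  D_antimagic (@cycle_dist n) (Dcopair n a k).
Proof.
split; exists lab; split; first exact: lab_ok; first exact: inj_pair.
- exact: lab_ok.
- move=> v w E; apply: inj_pair.
  have := wtot v; have := wtot w; rewrite E; lia.
Qed.
End W.

Definition sw2 (p q r s i : nat) :=
  if i == p then q else if i == q then p else if i == r then s else if i == s then r else i.

Lemma odd_ok n a k m : n = 2 * m + 1 -> 0 < k < n -> a < n ->
  D_antimagic (@cycle_dist n) (Dpair n a k) /\ D_antimagic (@cycle_dist n) (Dcopair n a k).
Proof.
move=> Hn Hk Ha; apply: (@pair_ok n a k id) => // i j Hi Hj /=; rewrite /addm; crush.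
Qed.

Lemma sw_ok n a k m p q r s : n = 2 * m -> 0 < k < n -> a < n ->
  (forall i, i < n -> sw2 p q r s i < n) ->
  (forall i, i < n -> sw2 p q r s (sw2 p q r s i) = i) ->
  (forall i j, i < n -> j < n -> sw2 p q r s i + sw2 p q r s (addm n i k) =
      sw2 p q r s j + sw2 p q r s (addm n j k) -> i = j) ->
  D_antimagic (@cycle_dist n) (Dpair n a k) /\ D_antimagic (@cycle_dist n) (Dcopair n a k).
Proof. move=> _ Hk Ha; exact: pair_ok. Qed.

Lemma ev1 n a m : n = 2*m -> 4 <= n -> a < n -> D_antimagic (@cycle_dist n) (Dpair n a 1) /\ D_antimagic (@cycle_dist n) (Dcopair n a 1).
Proof.
move=> Hm H4 Ha.
apply: (@sw_ok n a 1 m (n-2) (n-1) (n-2) (n-1)) => //; try lia.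
all: move=> i; try move=> j; rewrite /sw2 /addm; crush.
Qed.
Lemma ev2 n a m : n = 2*m -> 6 <= n -> a < n -> D_antimagic (@cycle_dist n) (Dpair n a 2) /\ D_antimagic (@cycle_dist n) (Dcopair n a 2).
Proof.
move=> Hm H4 Ha.
apply: (@sw_ok n a 2 m 0 (n-1) 0 (n-1)) => //; try lia.
all: move=> i; try move=> j; rewrite /sw2 /addm; crush.
Qed.
Lemma ev3a n a m : n = 2*m -> n = 4 -> a < n -> D_antimagic (@cycle_dist n) (Dpair n a 3) /\ D_antimagic (@cycle_dist n) (Dcopair n a 3).
Proof.
move=> Hm H4 Ha.
apply: (@sw_ok n a 3 m 2 3 2 3) => //; try lia.
all: move=> i; try move=> j; rewrite /sw2 /addm; crush.
Qed.
Lemma ev3b n a m : n = 2*m -> n = 8 -> a < n -> D_antimagic (@cycle_dist n) (Dpair n a 3) /\ D_antimagic (@cycle_dist n) (Dcopair n a 3).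
Proof.
move=> Hm H4 Ha.
apply: (@sw_ok n a 3 m 1 7 2 5) => //; try lia.
all: move=> i; try move=> j; rewrite /sw2 /addm; crush.
Qed.
Lemma ev3c n a m : n = 2*m -> 10 <= n -> a < n -> D_antimagic (@cycle_dist n) (Dpair n a 3) /\ D_antimagic (@cycle_dist n) (Dcopair n a 3).
Proof.
move=> Hm H4 Ha.
apply: (@sw_ok n a 3 m 0 (n-1) 1 (n-4)) => //; try lia.
all: move=> i; try move=> j; rewrite /sw2 /addm; crush.
Qed.

Theorem mainTheorem14 (n a : nat) (hn : 3 <= n) (ha : a <= n - 1) :
  D_antimagic (@cycle_dist n) (Dpair n a 1) /\
  (n != 4 -> D_antimagic (@cycle_dist n) (Dpair n a 2)) /\
  (4 <= n -> n != 6 -> D_antimagic (@cycle_dist n) (Dpair n a 3)) /\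
  D_antimagic (@cycle_dist n) (Dcopair n a 1) /\
  (n != 4 -> D_antimagic (@cycle_dist n) (Dcopair n a 2)) /\
  (4 <= n -> n != 6 -> D_antimagic (@cycle_dist n) (Dcopair n a 3)).
Proof.
have Ha : a < n by lia.
have Hn2 : n = odd n + 2 * n./2 by rewrite mul2n odd_double_half.
have [PC1 [PC2 PC3]] : (D_antimagic (@cycle_dist n) (Dpair n a 1) /\ D_antimagic (@cycle_dist n) (Dcopair n a 1)) /\
  (n != 4 -> D_antimagic (@cycle_dist n) (Dpair n a 2) /\ D_antimagic (@cycle_dist n) (Dcopair n a 2)) /\
  (4 <= n -> n != 6 -> D_antimagic (@cycle_dist n) (Dpair n a 3) /\ D_antimagic (@cycle_dist n) (Dcopair n a 3)).
  case Ho : (odd n) in Hn2.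
    have Hm : n = 2 * n./2 + 1 by lia.
    split; first by apply: (@odd_ok n a _ _ Hm); lia.
    split; first by move=> _; apply: (@odd_ok n a _ _ Hm); lia.
    by move=> H4 _; apply: (@odd_ok n a _ _ Hm); lia.
  have Hm : n = 2 * n./2 by lia.
  move: Hm; set m := n./2; clearbody m => Hm; clear Hn2 Ho.
  split; first by apply: (@ev1 n a _ Hm) => //; lia.
  split; first by move=> /eqP H4; apply: (@ev2 n a _ Hm) => //; lia.
  move=> H4 /eqP H6.
  case: (n =P 4) => [E4|N4]; first exact: (@ev3a n a _ Hm).
  case: (n =P 8) => [E8|N8]; first exact: (@ev3b n a _ Hm).
  apply: (@ev3c n a _ Hm) => //; lia.
case: PC1 => P1 C1.
split; first exact P1.
split; first by move=> /PC2 [].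
split; first by move=> H1 H2; case: (PC3 H1 H2).
split; first exact C1.
split; first by move=> /PC2 [].
by move=> H1 H2; case: (PC3 H1 H2).
Qed.
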